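(* Let $\mathbb{F}_2$ be the free group on $T_1,T_2$, $X=\{-1,1\}^{\mathbb{F}_2}$ with the product of uniform measures $m$ and the shift action $(gx)^h=x^{hg}$, and $X'=\{x\in X: gx\ne x$ for all $g\ne e\}$. Let $g_1,\dots,g_4$ be $T_1T_2^{-1},T_1^{-1}T_2,T_2T_1^{-1},T_2^{-1}T_1$ and $g_5,\dots,g_{16}$ the twelve distinct reduced-length-$4$ products of two of them. Let $K$ be the least number such that $X'$ can be partitioned into $K$ Borel sets $B_1,\dots,B_K$ with $x$ and $g_ix$ in different sets for all $i\le 16$, $x\in X'$; fix such a partition (each $B_j$ has positive measure) and put $\kappa(x)=j$ for $x\in B_j$. Let $N$ be an odd integer and $Q\subseteq X$ a Borel set with $m(Q)<1/512$ such that for every $x\in X'\setminus Q$ and every $j\le K$ there is $w\in\mathbb{F}_2$ of odd reduced length at most $N$ with $wx\in B_j$. For $x\in X$ let $t(x)=\{T_1x,T_2x\}$ if $x^e=1$ and $t(x)=\{T_1^{-1}x,T_2^{-1}x\}$ if $x^e=-1$. Let $Y=X\times\{1,2\}$ with measure $\tfrac12 m$ on each copy, $\mathbb{F}_2$ acting by $g(x,j)=(gx,j)$, and $\rho(x,1)=(x,2)$, $\rho(x,2)=(x,1)$; write $x$ for $(x,1)$. Define a graph on $Y$ with exactly the following edges: (a) distinct $x,y\in X'\setminus Q$ in the first copy are adjacent iff $t(x)\cap t(y)\ne\emptyset$; (b) for $x,y\in X'$, $\rho(x)$ and $\rho(y)$ are adjacent iff $y=wx$ for some $w$ of even reduced length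 at most $2N+10$ and $\kappa(y)\ne\kappa(x)$; (c) $x\in X'\setminus Q$ in the first copy is adjacent to $\rho(z)$ iff $z=wx$ for some $w$ of odd reduced length at most $N$ and $\kappa(z)\notin\kappa(t(x))$. Points of $Q$ in the first copy and points outside $X'$ have no other edges. Then proper vertex colouring of this graph with the colour set $\{1,\dots,K\}$ is paradoxical.
   Context: A colouring $c:Y\to\{1,\dots,K\}$ satisfies the proper colouring rule if for almost every vertex $v$, $c(v)\ne c(v')$ for all neighbours $v'$ of $v$. The rule is paradoxical if (a) some colouring (not necessarily measurable) satisfies it, and (b) there is no pair $(\mu,c)$ where $\mu$ is a finitely additive probability measure on an algebra $\mathcal{B}$ of subsets of $Y$, invariant under $\mathbb{F}_2$ and $\rho$, containing all measurable sets of the (completed) measure on $Y$ and extending it, and $c$ is a colouring satisfying the rule all of whose colour classes lie in $\mathcal{B}$. *)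

(* Defs.v *)
From HB Require Import structures.
From mathcomp Require Import all_boot all_order all_algebra.
From mathcomp Require Import all_classical all_reals all_analysis.

Set Implicit Arguments.
Unset Strict Implicit.
Unset Printing Implicit Defensive.

Import Order.TTheory GRing.Theory Num.Theory.
Local Open Scope classical_set_scope.
Local Open Scope ring_scope.

(* A letter (a, b): a = false means T1, a = true means T2;
   b = false means the generator, b = true means its inverse. *)
Definition letter := (bool * bool)%type.
Definition linv (l : letter) : letter := (l.1, ~~ l.2).

Definition reducedb (s : seq letter) : bool :=
  if s is a :: t then path (fun a b => b != linv a) a t else true.

Definition red (s : seq letter) : seq letter :=
  foldr (fun a acc => if acc is b :: t then
                        (if b == linv a then t else a :: acc)
                      else [:: a]) [::] s.

Lemma red_reduced s : reducedb (red s).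
Proof.
elim: s => [//|a s IH] /=.
case E: (red s) IH => [//|b t] /= H.
case: ifP => [_|/negbT Hb]; last by rewrite /= Hb.
by case: t H E => [//|c u] /= /andP[].
Qed.

Definition F2 := {s : seq letter | reducedb s}.

Definition F2len (g : F2) : nat := size (proj1_sig g).

Definition F2mul (g h : F2) : F2 :=
  exist _ (red (proj1_sig g ++ proj1_sig h)) (red_reduced _).

Definition F2e : F2 := exist _ [::] isT.
Definition F2let (l : letter) : F2 := exist _ [:: l] isT.
Definition T1 : F2 := F2let (false, false).
Definition T1i : F2 := F2let (false, true).
Definition T2 : F2 := F2let (true, false).
Definition T2i : F2 := F2let (true, true).

Definition g1 := F2mul T1 T2i.
Definition g2 := F2mul T1i T2.
Definition g3 := F2mul T2 T1i.
Definition g4 := F2mul T2i T1.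
Definition gfour : seq F2 := [:: g1; g2; g3; g4].

Definition gset (g : F2) : Prop :=
  g \in gfour \/
  exists a b, a \in gfour /\ b \in gfour /\ F2len (F2mul a b) = 4%N /\
              g = F2mul a b.

(* x h = true encodes x^h = 1, x h = false encodes x^h = -1 *)
Definition X := F2 -> bool.

Definition act (g : F2) (x : X) : X := fun h => x (F2mul h g).

Definition cyl : set (set X) :=
  [set A | exists (h : F2) (b : bool), A = [set x : X | x h = b]].

Definition XT := g_sigma_algebraType cyl.

(* m is the product of uniform measures: every finite-dimensional cylinder
   with n distinct prescribed coordinates has measure 2^-n *)
Definition is_product_uniform (R : realType) (m : {measure set XT -> \bar R}) :=
  forall (n : nat) (f : 'I_n -> F2) (b : 'I_n -> bool), injective f ->
    m [set x : X | forall i, x (f i) = b i] = ((2 : R) ^- n)%:E.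

Definition Xfree : set X := [set x | forall g : F2, g <> F2e -> act g x <> x].

Definition tset (x : X) : set X :=
  if x F2e then [set act T1 x; act T2 x] else [set act T1i x; act T2i x].

(* (x, false) is the first copy, (x, true) the second *)
Definition Y := (X * bool)%type.
Definition actY (g : F2) (v : Y) : Y := (act g v.1, v.2).
Definition rho (v : Y) : Y := (v.1, ~~ v.2).

Definition slice (A : set Y) (b : bool) : set X := [set x | A (x, b)].

Definition Yborel (A : set Y) : Prop :=
  measurable (slice A false : set XT) /\ measurable (slice A true : set XT).

Definition mY (R : realType) (m : {measure set XT -> \bar R}) (A : set Y) : \bar R :=
  ((2 : R)^-1)%:E * (m (slice A false) + m (slice A true))%E.

Definition Ycompl_meas (R : realType) (m : {measure set XT -> \bar R})
    (A : set Y) : Prop :=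
  exists B1 B2, Yborel B1 /\ Yborel B2 /\ B1 `<=` A /\ A `<=` B2 /\
                mY m (B2 `\` B1) = 0%E.

Definition adj (Q : set X) (kappa : X -> nat) (N : nat) (v v' : Y) : Prop :=
  match v, v' with
  | (x, false), (y, false) =>
      x <> y /\ Xfree x /\ ~ Q x /\ Xfree y /\ ~ Q y /\
      exists u, tset x u /\ tset y u
  | (x, true), (y, true) =>
      Xfree x /\ Xfree y /\
      (exists w : F2, ~~ odd (F2len w) /\ (F2len w <= 2 * N + 10)%N /\ y = act w x) /\
      kappa y <> kappa x
  | (x, false), (z, true) | (z, true), (x, false) =>
      Xfree x /\ ~ Q x /\
      (exists w : F2, odd (F2len w) /\ (F2len w <= N)%N /\ z = act w x) /\
      (forall u, tset x u -> kappa z <> kappa u)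
  end.

Definition colouring (K : nat) (c : Y -> nat) : Prop :=
  forall v, (1 <= c v <= K)%N.

Definition satisfies_rule (R : realType) (m : {measure set XT -> \bar R})
    (E : Y -> Y -> Prop) (c : Y -> nat) : Prop :=
  exists Z : set Y, Yborel Z /\ mY m Z = 0%E /\
    forall v, ~ Z v -> forall v', E v v' -> c v <> c v'.

Definition is_algebra (B : set (set Y)) : Prop :=
  B setT /\ (forall A, B A -> B (~` A)) /\ (forall A A', B A -> B A' -> B (A `|` A')).

Definition good_pair (R : realType) (m : {measure set XT -> \bar R})
    (E : Y -> Y -> Prop) (K : nat) (B : set (set Y)) (mu : set Y -> R)
    (c : Y -> nat) : Prop :=
  is_algebra B /\
  (forall A, B A -> 0 <= mu A) /\ mu setT = 1 /\
  (forall A A', B A -> B A' -> A `&` A' = set0 -> mu (A `|` A') = mu A + mu A') /\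
  (forall g A, B A -> B (actY g @` A) /\ mu (actY g @` A) = mu A) /\
  (forall A, B A -> B (rho @` A) /\ mu (rho @` A) = mu A) /\
  (forall A, Ycompl_meas m A -> B A) /\
  (forall A B1 B2, Yborel B1 -> Yborel B2 -> B1 `<=` A -> A `<=` B2 ->
      mY m (B2 `\` B1) = 0%E -> (mu A)%:E = mY m B1) /\
  colouring K c /\ satisfies_rule m E c /\
  (forall j, (1 <= j <= K)%N -> B [set v | c v = j]).

Definition paradoxical (R : realType) (m : {measure set XT -> \bar R})
    (E : Y -> Y -> Prop) (K : nat) : Prop :=
  (exists c, colouring K c /\ satisfies_rule m E c) /\
  ~ (exists B mu c, good_pair m E K B mu c).

Definition borel_gcolouring (K' : nat) (k : X -> nat) : Prop :=
  (forall x, Xfree x -> (1 <= k x <= K')%N) /\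
  (forall j, measurable ([set x | Xfree x /\ k x = j] : set XT)) /\
  (forall x g, Xfree x -> gset g -> k x <> k (act g x)).

(* Main.v *)
Require Import Defs.
From HB Require Import structures.
From mathcomp Require Import all_boot all_order all_algebra.
From mathcomp Require Import all_classical all_reals all_analysis.
Import Order.TTheory GRing.Theory Num.Theory.
Local Open Scope classical_set_scope.
Local Open Scope ring_scope.
From Stdlib Require Import ClassicalEpsilon.
From mathcomp Require Import lra.
Set Implicit Arguments. Unset Strict Implicit. Unset Printing Implicit Defensive.

Definition stepl (a : letter) (acc : seq letter) : seq letter :=
  if acc is b :: t then (if b == linv a then t else a :: acc) else [:: a].

Lemma red_foldr s : red s = foldr stepl [::] s.
Proof. by []. Qed.

Lemma linvK a : linv (linv a) = a.
Proof. by case: a => a b /=; rewrite /linv /= negbK. Qed.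

Lemma linv_eq a b : (linv a == b) = (a == linv b).
Proof. by apply/eqP/eqP => [<-|->]; rewrite linvK. Qed.

Lemma reducedb_cons a t : reducedb (a :: t) =
  (if t is b :: _ then b != linv a else true) && reducedb t.
Proof. by case: t. Qed.

Lemma step_red a acc : reducedb acc -> reducedb (stepl a acc).
Proof.
case: acc => [//|b t] /=; case: ifP => [_|/negbT H] Hr.
  by case: t Hr => //= c u /andP[].
by rewrite /= H Hr.
Qed.

Lemma foldr_step_red acc s : reducedb acc -> reducedb (foldr stepl acc s).
Proof. by move=> H; elim: s => //= a s IH; apply: step_red. Qed.

Lemma step_cancel a acc : reducedb acc -> stepl a (stepl (linv a) acc) = acc.
Proof.
case: acc => [|b t] /=; first by rewrite eqxx.
case: ifP => [/eqP Eb|/negbT Eb] Hr.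
  move: Hr; rewrite linvK in Eb; subst b.
  case: t => [//|c u] /= /andP[Hc _]; by rewrite (negbTE Hc).
by rewrite /stepl eqxx.
Qed.

Lemma red_id s : reducedb s -> red s = s.
Proof.
elim: s => [//|a s IH] Hr; rewrite /= IH; last by move: Hr; rewrite reducedb_cons => /andP[].
move: Hr; rewrite reducedb_cons; case: s {IH} => [//|b t] /= /andP[Hb _].
by rewrite (negbTE Hb).
Qed.

Lemma red_cat s t : red (s ++ t) = foldr stepl (red t) s.
Proof. by rewrite /red foldr_cat. Qed.

Lemma foldr_step_stepl acc r a : reducedb acc ->
  foldr stepl acc (stepl a r) = stepl a (foldr stepl acc r).
Proof.
move=> Hacc; case: r => [//|b t] /=.
case: ifP => [/eqP ->|//].
by rewrite step_cancel //; apply: foldr_step_red.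
Qed.

Lemma foldr_red acc s : reducedb acc -> foldr stepl acc (red s) = foldr stepl acc s.
Proof.
move=> H; elim: s => [//|a s IH].
by rewrite [red _]/= -/(red s) -/(stepl a (red s)) foldr_step_stepl // IH.
Qed.

Lemma red_red s : red (red s) = red s.
Proof. by rewrite red_id // red_reduced. Qed.

Lemma red_assoc s t u : red (red (s ++ t) ++ u) = red (s ++ red (t ++ u)).
Proof.
rewrite [LHS]red_cat foldr_red ?red_reduced // foldr_cat.
by rewrite [RHS]red_cat red_red red_cat.
Qed.

Definition winv (s : seq letter) : seq letter := rev (map linv s).

Lemma winv_cons a s : winv (a :: s) = rcons (winv s) (linv a).
Proof. by rewrite /winv /= rev_cons. Qed.

Lemma winvK s : winv (winv s) = s.
Proof. by rewrite /winv map_rev revK -map_comp map_id_in // => x _ /=; rewrite linvK. Qed.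

Lemma foldr_winv s : foldr stepl s (winv s) = [::].
Proof.
elim: s => [//|a s IH].
by rewrite winv_cons -cats1 foldr_cat /= linvK eqxx IH.
Qed.

Lemma reduced_sorted s : reducedb s = sorted (fun a b => b != linv a) s.
Proof. by case: s. Qed.

Lemma winv_reduced s : reducedb s -> reducedb (winv s).
Proof.
rewrite !reduced_sorted /winv rev_sorted sorted_map.
case: s => [//|a t] /=; apply: sub_path => x y /=.
by rewrite linvK eq_sym.
Qed.

Lemma red_winv_l s : reducedb s -> red (winv s ++ s) = [::].
Proof. by move=> H; rewrite red_cat red_id // foldr_winv. Qed.

Lemma red_winv_r s : reducedb s -> red (s ++ winv s) = [::].
Proof.
move=> H; have := red_winv_l (winv_reduced H); by rewrite winvK.
Qed.

Definition F2inv (g : F2) : F2 := exist _ (winv (val g)) (winv_reduced (valP g)).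

Lemma F2_eq (g h : F2) : val g = val h -> g = h.
Proof. exact: val_inj. Qed.

Lemma F2mulA g h k : F2mul (F2mul g h) k = F2mul g (F2mul h k).
Proof. by apply: F2_eq; rewrite /= red_assoc. Qed.

Lemma F2mul1g g : F2mul F2e g = g.
Proof. by apply: F2_eq; rewrite /= red_id // (valP g). Qed.

Lemma F2mulg1 g : F2mul g F2e = g.
Proof. by apply: F2_eq; rewrite /= cats0 red_id // (valP g). Qed.

Lemma F2mulVg g : F2mul (F2inv g) g = F2e.
Proof. by apply: F2_eq; rewrite /= red_winv_l // (valP g). Qed.

Lemma F2mulgV g : F2mul g (F2inv g) = F2e.
Proof. by apply: F2_eq; rewrite /= red_winv_r // (valP g). Qed.

Lemma F2invK g : F2inv (F2inv g) = g.
Proof. by apply: F2_eq; rewrite /= winvK. Qed.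

Lemma F2mulKg g h : F2mul (F2inv g) (F2mul g h) = h.
Proof. by rewrite -F2mulA F2mulVg F2mul1g. Qed.

Lemma F2mulVKg g h : F2mul g (F2mul (F2inv g) h) = h.
Proof. by rewrite -F2mulA F2mulgV F2mul1g. Qed.

Lemma F2mul_invE g h : F2mul g h = F2e -> h = F2inv g.
Proof. by move=> E; rewrite -(F2mulKg g h) E F2mulg1. Qed.

Lemma F2inv_mul g h : F2inv (F2mul g h) = F2mul (F2inv h) (F2inv g).
Proof.
symmetry; apply: F2mul_invE.
by rewrite F2mulA -(F2mulA h) F2mulgV F2mul1g F2mulgV.
Qed.

Lemma act_mul g h x : act g (act h x) = act (F2mul g h) x.
Proof. by apply/funext => k; rewrite /act F2mulA. Qed.

Lemma act_e x : act F2e x = x.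
Proof. by apply/funext => k; rewrite /act F2mulg1. Qed.

Lemma actK g x : act (F2inv g) (act g x) = x.
Proof. by rewrite act_mul F2mulVg act_e. Qed.

Lemma actVK g x : act g (act (F2inv g) x) = x.
Proof. by rewrite act_mul F2mulgV act_e. Qed.

Lemma act_free_inj x g h : Xfree x -> act g x = act h x -> g = h.
Proof.
move=> Hx E.
have E2 : act (F2mul (F2inv h) g) x = x by rewrite -act_mul E actK.
case: (pselect (F2mul (F2inv h) g = F2e)) => [E3|E3]; last by case: (Hx _ E3).
by rewrite -(F2mulVKg h g) E3 F2mulg1.
Qed.

Lemma Xfree_act g x : Xfree x -> Xfree (act g x).
Proof.
move=> Hx h Hh E.
have : act (F2mul (F2mul (F2inv g) h) g) x = act F2e x.
  by rewrite act_e -!act_mul E actK.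
move/(act_free_inj Hx) => E2; apply: Hh.
move/F2mul_invE: E2; rewrite F2inv_mul F2invK => E3.
have : F2mul (F2mul (F2inv h) g) (F2inv g) = F2mul g (F2inv g) by rewrite -E3.
rewrite F2mulA !F2mulgV F2mulg1 => E4.
by rewrite -(F2invK h) E4; apply: F2_eq.
Qed.

Lemma size_stepl a acc :
  (size (stepl a acc) <= (size acc).+1)%N /\
  odd (size (stepl a acc)) = ~~ odd (size acc).
Proof.
case: acc => [//|b t] /=; case: ifP => _ /=; last by rewrite negbK.
by split; [apply: leqW; apply: leqnSn | by rewrite negbK].
Qed.

Lemma size_foldr acc s :
  (size (foldr stepl acc s) <= size acc + size s)%N /\
  odd (size (foldr stepl acc s)) = odd (size acc + size s).
Proof.
elim: s => [|a s [IH1 IH2]] /=; first by rewrite addn0.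
have [H1 H2] := size_stepl a (foldr stepl acc s).
split; first by apply: (leq_trans H1); rewrite addnS ltnS.
by rewrite H2 IH2 addnS /=.
Qed.

Lemma F2len_mul g h : (F2len (F2mul g h) <= F2len g + F2len h)%N /\
  odd (F2len (F2mul g h)) = odd (F2len g + F2len h).
Proof.
rewrite /F2len /F2mul /= red_cat (red_id (valP h)).
have [H1 H2] := size_foldr (val h) (val g).
by rewrite addnC; split => //; rewrite H2 addnC.
Qed.

Lemma F2len_inv g : F2len (F2inv g) = F2len g.
Proof. by rewrite /F2len /= /winv size_rev size_map. Qed.

Lemma F2inv_let l : F2inv (F2let l) = F2let (linv l).
Proof. by apply: F2_eq. Qed.

Lemma F2len_let l : F2len (F2let l) = 1%N.
Proof. by []. Qed.

Definition gsetb (g : F2) : bool :=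
  (g \in gfour) || has (fun a => has (fun b =>
      (F2len (F2mul a b) == 4%N) && (g == F2mul a b)) gfour) gfour.

Lemma gsetbP g : gsetb g -> gset g.
Proof.
case/orP => [H|]; first by left.
case/hasP => a Ha /hasP [b Hb /andP[/eqP H1 /eqP H2]].
by right; exists a, b.
Qed.

Definition Lset (s : bool) : seq letter := [:: (false, ~~ s); (true, ~~ s)].

Definition wcase (cx p cy q : letter) : F2 :=
  F2mul (F2mul (F2mul (F2let cy) (F2let (linv q))) (F2let p)) (F2let (linv cx)).

Lemma wcase_check : all (fun sx => all (fun sy =>
   all (fun cx => all (fun p => all (fun cy => all (fun q =>
     (wcase cx p cy q == F2e) || gsetb (wcase cx p cy q)) (Lset sy)) (Lset sy))
      (Lset sx)) (Lset sx)) [:: true; false]) [:: true; false].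
Proof. by vm_compute. Qed.

Lemma tsetP x u : tset x u <-> exists2 p, p \in Lset (x F2e) & u = act (F2let p) x.
Proof.
rewrite /tset /Lset; case: (x F2e) => /=; split.
- by case=> ->; [exists (false,false) | exists (true,false)]; rewrite ?inE ?eqxx ?orbT.
- by case=> p; rewrite !inE => /orP[] /eqP -> ->; [left|right].
- by case=> ->; [exists (false,true) | exists (true,true)]; rewrite ?inE ?eqxx ?orbT.
- by case=> p; rewrite !inE => /orP[] /eqP -> ->; [left|right].
Qed.

Definition orbit (x : X) : set X := [set y | exists g, y = act g x].

Lemma orbit_act g x : orbit (act g x) = orbit x.
Proof.
apply/seteqP; split => y [h ->].
  by exists (F2mul h g); rewrite act_mul.
by exists (F2mul h (F2inv g)); rewrite act_mul F2mulA F2mulVg F2mulg1.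
Qed.

Definition Xinh : inhabited X := inhabits (fun _ : F2 => true).
Definition root (x : X) : X := epsilon Xinh (orbit x).

Lemma root_orbit x : orbit x (root x).
Proof. by apply: (epsilon_spec Xinh (orbit x)); exists x, F2e; rewrite act_e. Qed.

Lemma root_act g x : root (act g x) = root x.
Proof. by rewrite /root orbit_act. Qed.

Lemma root_ex x : exists g, x = act g (root x).
Proof. by case: (root_orbit x) => g ->; exists (F2inv g); rewrite actK. Qed.

Definition wd (x : X) : F2 := epsilon (inhabits F2e) (fun g => x = act g (root x)).

Lemma wd_spec x : x = act (wd x) (root x).
Proof. exact: (epsilon_spec (inhabits F2e) (fun g => x = act g (root x)) (root_ex x)). Qed.

Lemma Xfree_root x : Xfree x -> Xfree (root x).
Proof. by move=> H; rewrite (wd_spec x) in H; rewrite -(actK (wd x) (root x)); apply: Xfree_act. Qed.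

Lemma wd_uniq x g : Xfree x -> x = act g (root x) -> wd x = g.
Proof.
move=> Hx E; apply: (act_free_inj (Xfree_root Hx)).
by rewrite -wd_spec.
Qed.

Definition cl (x : X) : letter :=
  let s := x F2e in
  if val (wd x) is a :: _ then
    (if (false, ~~ s) == linv a then (true, ~~ s) else (false, ~~ s))
  else (false, ~~ s).

Lemma cl_in x : cl x \in Lset (x F2e).
Proof.
rewrite /cl /Lset; case: (val (wd x)) => [|a _]; first by rewrite inE eqxx.
by case: ifP => _; rewrite !inE eqxx ?orbT.
Qed.

Lemma cl_red x : reducedb (cl x :: val (wd x)).
Proof.
have Hr := valP (wd x); rewrite /cl.
case E: (val (wd x)) Hr => [//|a t] Hr; rewrite reducedb_cons Hr andbT.
case: ifP => [/eqP E2|/negbT E2] //.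
  by rewrite -(linvK a) -E2 /linv /=; case: (x F2e).
by rewrite -linv_eq eq_sym.
Qed.

Definition uu (x : X) : X := act (F2let (cl x)) x.

Lemma uu_wd x : Xfree x -> val (wd (uu x)) = cl x :: val (wd x).
Proof.
move=> Hx.
have Hu : Xfree (uu x) by apply: Xfree_act.
have -> : wd (uu x) = F2mul (F2let (cl x)) (wd x).
  apply: wd_uniq => //.
  by rewrite /uu root_act -act_mul -wd_spec.
exact: (red_id (cl_red x)).
Qed.

Lemma uu_inj x y : Xfree x -> Xfree y -> uu x = uu y -> x = y.
Proof.
move=> Hx Hy E.
have Er : root x = root y by rewrite -(root_act (F2let (cl x)) x) -(root_act (F2let (cl y)) y) -/(uu x) -/(uu y) E.
have := uu_wd Hx; rewrite E uu_wd // => -[_ Ew].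
by rewrite (wd_spec x) (wd_spec y) Er (F2_eq Ew).
Qed.

Lemma uu_tset x : tset x (uu x).
Proof. by apply/tsetP; exists (cl x); [apply: cl_in|]. Qed.

Lemma wcase_ok sx sy cx p cy q : cx \in Lset sx -> p \in Lset sx ->
  cy \in Lset sy -> q \in Lset sy -> wcase cx p cy q = F2e \/ gset (wcase cx p cy q).
Proof.
move=> H1 H2 H3 H4.
have := wcase_check; move/allP/(_ sx); rewrite !inE; case: sx H1 H2 => H1 H2 /(_ isT);
move/allP/(_ sy); case: sy H3 H4 => H3 H4 /(_ isT);
move/allP/(_ _ H1)/allP/(_ _ H2)/allP/(_ _ H3)/allP/(_ _ H4) => /orP[/eqP ->|/gsetbP]; by [left|right].
Qed.

Section PartA.
Variables (K : nat) (kappa : X -> nat) (N : nat) (Q : set X).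
Hypothesis Hk : borel_gcolouring K kappa.

Definition cA (v : Y) : nat :=
  let (x, b) := v in
  if b then (if pselect (Xfree x) then kappa x else 1%N)
  else (if pselect (Xfree x /\ ~ Q x) then kappa (uu x) else 1%N).

Arguments cA : simpl never.

Lemma cA_true x : Xfree x -> cA (x, true) = kappa x.
Proof. by move=> H; rewrite /cA; case: pselect. Qed.

Lemma cA_false x : Xfree x -> ~ Q x -> cA (x, false) = kappa (uu x).
Proof. by move=> H1 H2; rewrite /cA; case: pselect => // -[]. Qed.

Lemma cA_prop v v' : adj Q kappa N v v' -> cA v <> cA v'.
Proof.
case: Hk => _ [_ Hg].
case: v => x []; case: v' => y [] /=.
- by move=> [Fx [Fy [_ H]]]; rewrite cA_true // cA_true // => /esym.
- move=> [Fy [Qy [[w [_ [_ Ez]]] Hu]]].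
  have Fx : Xfree x by rewrite Ez; apply: Xfree_act.
  by rewrite cA_true // cA_false // => E; apply: (Hu _ (uu_tset y)).
- move=> [Fx [Qx [[w [_ [_ Ez]]] Hu]]].
  have Fy : Xfree y by rewrite Ez; apply: Xfree_act.
  by rewrite cA_true // cA_false // => E; apply: (Hu _ (uu_tset x)).
- move=> [xy [Fx [Qx [Fy [Qy [u [tx ty]]]]]]].
  rewrite cA_false // cA_false //.
  case/tsetP: tx => p Hp Eu; case/tsetP: ty => q Hq Eu'.
  have Ew : uu y = act (wcase (cl x) p (cl y) q) (uu x).
    rewrite /uu act_mul /wcase !F2mulA -F2inv_let -[F2let (linv (cl x))]F2inv_let.
    by rewrite F2mulVg F2mulg1 -!act_mul -Eu Eu' actK.
  case: (wcase_ok (cl_in x) Hp (cl_in y) Hq) => [E|Hgs].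
    by move=> _; apply: xy; apply: uu_inj => //; rewrite Ew E act_e.
  rewrite Ew; apply: Hg => //; exact: Xfree_act.
Qed.
End PartA.

Lemma bigsetI_mem (T : Type) (I : eqType) (r : seq I) (F : I -> set T) x :
  (\big[setI/setT]_(i <- r) F i) x <-> (forall i, i \in r -> F i x).
Proof.
elim: r => [|i r IH]; first by rewrite big_nil; split.
rewrite big_cons; split.
  by case=> H1 /IH H2 j; rewrite inE => /orP[/eqP ->|/H2].
by move=> H; split; [apply: H; rewrite inE eqxx | apply/IH => j Hj; apply: H; rewrite inE Hj orbT].
Qed.

Lemma bigsetU_mem (T : Type) (I : eqType) (r : seq I) (F : I -> set T) x :
  (\big[setU/set0]_(i <- r) F i) x <-> (exists2 i, i \in r & F i x).
Proof.
elim: r => [|i r IH]; first by rewrite big_nil; split => // -[].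
rewrite big_cons; split.
  case=> [H|/IH [j Hj H]]; first by exists i; rewrite ?inE ?eqxx.
  by exists j; rewrite // inE Hj orbT.
case=> j; rewrite inE => /orP[/eqP -> H|Hj H]; first by left.
by right; apply/IH; exists j.
Qed.

Lemma meas_coord (h : F2) (b : bool) : measurable ([set x : X | x h = b] : set XT).
Proof. by apply: sub_sigma_algebra; exists h, b. Qed.

Lemma meas_cyl n (f : 'I_n -> F2) (b : 'I_n -> bool) :
  measurable ([set x : X | forall i, x (f i) = b i] : set XT).
Proof.
have -> : ([set x : X | forall i, x (f i) = b i] : set XT) =
  \big[setI/setT]_(i <- enum 'I_n) [set x : XT | x (f i) = b i].
  apply/seteqP; split => x /=.
    by move=> H; apply/bigsetI_mem => i _; apply: H.
  by move/bigsetI_mem => H i; apply: H; rewrite mem_enum.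
by apply: bigsetI_measurable => i _; apply: meas_coord.
Qed.

Definition Tl (g : F2) : letter := if val g is a :: _ then (~~ a.1, false) else (false, false).

Lemma Tl_ok (g : F2) : Tl g != linv (Tl g).
Proof. by rewrite /Tl /linv; case: (val g) => [|[[] b] _]. Qed.

Lemma nseq_red (T : letter) i : T != linv T -> reducedb (nseq i T).
Proof.
move=> H; elim: i => [//|i IH]; rewrite reducedb_cons IH andbT.
by case: i {IH} => [//|i] /=.
Qed.

Definition tp (g : F2) (i : nat) : F2 := exist _ (nseq i (Tl g)) (nseq_red i (Tl_ok g)).

Lemma Tl_head (g : F2) a t : val g = a :: t -> a != Tl g /\ a != linv (Tl g).
Proof. by rewrite /Tl => ->; case: a => [[] []]. Qed.

Lemma nseq_cat_red (g : F2) i : g <> F2e -> reducedb (nseq i (Tl g) ++ val g).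
Proof.
move=> Hg; case E: (val g) => [|a t].
  by case: Hg; apply: F2_eq; rewrite E.
have [H1 H2] := Tl_head E.
elim: i => [|i IH]; first by have := valP g; rewrite E.
rewrite [nseq _ _ ++ _]/= reducedb_cons IH andbT.
by case: i {IH} => [|i] /=; [|apply: Tl_ok].
Qed.

Lemma val_tpg g i : g <> F2e -> val (F2mul (tp g i) g) = nseq i (Tl g) ++ val g.
Proof. by move=> Hg; rewrite /= red_id // nseq_cat_red. Qed.

Section Fix.
Variables (g : F2) (n : nat).
Hypothesis Hg : g <> F2e.

Definition fco (i : 'I_(n + n)) : F2 :=
  match fintype.split i with inl j => tp g j | inr j => F2mul (tp g j) g end.

Lemma fco_inj : injective fco.
Proof.
have Hne : forall j j', nseq j (Tl g) <> nseq j' (Tl g) ++ val g.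
  move=> j j' E; case E2: (val g) => [|a t].
    by case: Hg; apply: F2_eq; rewrite E2.
  have [H1 _] := Tl_head E2.
  have : a \in nseq j (Tl g) by rewrite E mem_cat E2 inE eqxx orbT.
  by rewrite mem_nseq (negbTE H1) andbF.
move=> i i'; rewrite /fco; case: splitP => j Ei; case: splitP => j' Ei' E;
  apply: val_inj; rewrite /= Ei Ei'.
- by move/(congr1 (fun s => size (val s))): E; rewrite /= !size_nseq.
- by move/(congr1 val): E; rewrite val_tpg //= => /Hne.
- by move/(congr1 val): E; rewrite val_tpg //= => /esym /Hne.
- move/(congr1 (fun s => size (val s))): E; rewrite !val_tpg // !size_cat !size_nseq.
  by move/eqP; rewrite eqn_add2r => /eqP ->.
Qed.

Definition bco (b : {ffun 'I_n -> bool}) (i : 'I_(n + n)) : bool :=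
  match fintype.split i with inl j => b j | inr j => b j end.

Definition Cco (b : {ffun 'I_n -> bool}) : set XT :=
  [set x : X | forall i, x (fco i) = bco b i].

Definition Mco := #|{ffun 'I_n -> bool}|.
Definition b0 : {ffun 'I_n -> bool} := [ffun => false].

Definition UU : set XT := \big[setU/set0]_(k < Mco) Cco (nth b0 (enum {ffun 'I_n -> bool}) k).

Lemma UU_meas : measurable UU.
Proof. by apply: bigsetU_measurable => k _; apply: meas_cyl. Qed.

Lemma Fix_UU x : act g x = x -> UU x.
Proof.
move=> Hx; rewrite /UU.
pose b := [ffun j : 'I_n => x (tp g j)].
have Hb : b \in enum {ffun 'I_n -> bool} by rewrite mem_enum.
apply/bigsetU_mem.
have Hk : (index b (enum {ffun 'I_n -> bool}) < Mco)%N by rewrite /Mco cardE index_mem.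
exists (Ordinal Hk); first by rewrite mem_index_enum.
rewrite /= nth_index // => i; rewrite /fco /bco; case: splitP => j _; rewrite ffunE //.
by rewrite -[in RHS]Hx.
Qed.

Variables (R : realType) (m : {measure set XT -> \bar R}).
Hypothesis Hpu : is_product_uniform m.

Lemma UU_le : (m UU <= ((2 : R) ^- n)%:E)%E.
Proof.
apply: (le_trans (content_subadditive m
   (F := fun k => Cco (nth b0 (enum {ffun 'I_n -> bool}) k)) (n := Mco) _ UU_meas _)).
- by move=> k _; apply: meas_cyl.
- by [].
rewrite (eq_bigr (fun _ => ((2 : R) ^- (n + n))%:E)); last first.
  by move=> k _; apply: Hpu; apply: fco_inj.
rewrite sumEFin big_const_ord lee_fin.
have -> : Mco = (2 ^ n)%N by rewrite /Mco card_ffun card_bool card_ord.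
rewrite iter_addr addr0 -(mulr_natr ((2:R)^-(n+n))) natrX.
by rewrite exprD invfM -mulrA mulVf ?mulr1.
Qed.
End Fix.

Lemma pow_aux2 (R : realType) k : (2:R)^-(k+6) = (32:R)^-1 / (2 ^ k.+1)%:R.
Proof.
rewrite natrX -invfM.
have -> : (32:R) = 2 ^+ 5 by rewrite -natrX.
by rewrite -exprD addnC addnS.
Qed.

Definition Fk (k : nat) : set XT :=
  match unpickle k with
  | Some g => if g == F2e then set0 else UU g (k + 6)
  | None => set0
  end.

Lemma Fk_meas k : measurable (Fk k).
Proof. rewrite /Fk; case: unpickle => [g|//]; case: ifP => // _; exact: UU_meas. Qed.

Lemma nonfree_cover : (~` Xfree : set XT) `<=` \bigcup_k Fk k.
Proof.
move=> x /= Hx.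
have [g [Hg Hgx]] : exists g, g <> F2e /\ act g x = x.
  apply: contrapT => H; apply: Hx => g Hg E; apply: H; by exists g.
exists (pickle g) => //; rewrite /Fk pickleK.
case: eqP => // _; exact: Fix_UU.
Qed.

Section NonFree.
Variables (R : realType) (m : {measure set XT -> \bar R}).
Hypothesis Hpu : is_product_uniform m.

Lemma nonfree_small : measurable (~` Xfree : set XT) ->
  (m (~` Xfree) <= ((32:R)^-1)%:E)%E.
Proof.
move=> Hm.
apply: (le_trans (measure_sigma_subadditive m Fk_meas Hm nonfree_cover)).
apply: le_trans; last exact: (epsilon_trick0 xpredT (eps := (32:R)^-1) _).
apply: lee_nneseries => [k _ _|k _]; first exact: measure_ge0.
rewrite /Fk; case: unpickle => [g|]; last by rewrite measure0 lee_fin; apply: divr_ge0.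
case: eqP => [_|Hg]; first by rewrite measure0 lee_fin; apply: divr_ge0.
by rewrite -pow_aux2; apply: UU_le.
Qed.
End NonFree.

Lemma pigeon (K : nat) (phi : nat -> nat) :
  (forall j, (1 <= j <= K)%N -> (1 <= phi j <= K)%N) ->
  (forall j j', (1 <= j <= K)%N -> (1 <= j' <= K)%N -> j <> j' -> phi j <> phi j') ->
  forall k, (1 <= k <= K)%N -> exists j, (1 <= j <= K)%N /\ phi j = k.
Proof.
move=> Hr Hi k Hk.
have Hin : forall j, (j \in iota 1 K) = (1 <= j <= K)%N.
  by move=> j; rewrite mem_iota addnC addn1 ltnS.
have Hu : uniq (map phi (iota 1 K)).
  rewrite map_inj_in_uniq ?iota_uniq // => j j' Hj Hj' E; apply/eqP/negP => /negP/eqP.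
  by move: Hj Hj'; rewrite !Hin => Hj Hj' /(Hi _ _ Hj Hj'); rewrite E.
have Hs : {subset map phi (iota 1 K) <= iota 1 K}.
  by move=> y /mapP [j Hj ->]; rewrite Hin; apply: Hr; rewrite -Hin.
have Hsz : (size (iota 1 K) <= size (map phi (iota 1 K)))%N by rewrite size_map.
have [_ Heq] := uniq_min_size Hu Hs Hsz.
have : k \in map phi (iota 1 K) by rewrite Heq Hin.
by case/mapP => j Hj ->; exists j; rewrite -Hin.
Qed.

Section Alg.
Variables (R : realType) (B : set (set Y)) (mu : set Y -> R).
Local Notation T := Y.
Hypothesis Halg : is_algebra B.
Hypothesis Hpos : forall A, B A -> 0 <= mu A.
Hypothesis Hadd : forall A A', B A -> B A' -> A `&` A' = set0 -> mu (A `|` A') = mu A + mu A'.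

Lemma BT : B setT. Proof. by case: Halg. Qed.
Lemma BC A : B A -> B (~` A). Proof. by case: Halg => _ [H _]; apply: H. Qed.
Lemma BU A A' : B A -> B A' -> B (A `|` A'). Proof. by case: Halg => _ [_ H]; apply: H. Qed.
Lemma B0 : B set0. Proof. by rewrite -setCT; apply: BC; apply: BT. Qed.
Lemma BI A A' : B A -> B A' -> B (A `&` A').
Proof. by move=> H1 H2; rewrite -[A]setCK -[A']setCK -setCU; apply/BC/BU; apply: BC. Qed.
Lemma BD A A' : B A -> B A' -> B (A `\` A').
Proof. by move=> H1 H2; rewrite setDE; apply: BI => //; apply: BC. Qed.

Lemma B_bigU (I : Type) (r : seq I) (F : I -> set T) :
  (forall i, B (F i)) -> B (\big[setU/set0]_(i <- r) F i).
Proof.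
move=> H; elim: r => [|i r IH]; first by rewrite big_nil; apply: B0.
by rewrite big_cons; apply: BU.
Qed.

Lemma B_bigU_in (I : eqType) (r : seq I) (F : I -> set T) :
  (forall i, i \in r -> B (F i)) -> B (\big[setU/set0]_(i <- r) F i).
Proof.
elim: r => [|i r IH] H; first by rewrite big_nil; apply: B0.
rewrite big_cons; apply: BU; first by apply: H; rewrite inE eqxx.
by apply: IH => j Hj; apply: H; rewrite inE Hj orbT.
Qed.

Lemma mu0 : mu set0 = 0.
Proof.
have := Hadd B0 B0 (setI0 set0); rewrite setU0 => E; lra.
Qed.

Lemma mu_mono A A' : B A -> B A' -> A `<=` A' -> mu A <= mu A'.
Proof.
move=> H1 H2 Hs.
rewrite -(setDUK Hs) (Hadd H1 (BD H2 H1) (setDIK _ _)).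
by rewrite lerDl; apply: Hpos; apply: BD.
Qed.

Lemma mu_sub A A' : B A -> B A' -> mu (A `|` A') <= mu A + mu A'.
Proof.
move=> H1 H2.
have -> : A `|` A' = A `|` (A' `\` A).
  apply/seteqP; split => x /=; last by case=> [|[]]; [left|right].
  by case: (pselect (A x)) => Hx [H|H]; [left|left|left|right].
rewrite (Hadd H1 (BD H2 H1) (setDIK _ _)).
by rewrite lerD2l; apply: mu_mono => //; apply: BD.
Qed.

Lemma mu_bigU (I : eqType) (r : seq I) (F : I -> set T) :
  (forall i, i \in r -> B (F i)) ->
  mu (\big[setU/set0]_(i <- r) F i) <= \sum_(i <- r) mu (F i).
Proof.
elim: r => [|i r IH] H; first by rewrite !big_nil mu0.
have Hi : B (F i) by apply: H; rewrite inE eqxx.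
have Hr : forall j, j \in r -> B (F j) by move=> j Hj; apply: H; rewrite inE Hj orbT.
rewrite !big_cons; apply: le_trans (mu_sub Hi (B_bigU_in Hr)) _.
by rewrite lerD2l; apply: IH.
Qed.

Lemma mu_bigU_disj (I : eqType) (r : seq I) (F : I -> set T) :
  uniq r -> (forall i, i \in r -> B (F i)) ->
  (forall i j, i \in r -> j \in r -> i != j -> F i `&` F j = set0) ->
  mu (\big[setU/set0]_(i <- r) F i) = \sum_(i <- r) mu (F i).
Proof.
elim: r => [|i r IH] Hu H Hd; first by rewrite !big_nil mu0.
have Hi : B (F i) by apply: H; rewrite inE eqxx.
have Hr : forall j, j \in r -> B (F j) by move=> j Hj; apply: H; rewrite inE Hj orbT.
move: Hu => /= /andP[Hir Hu].
have Hdis : F i `&` \big[setU/set0]_(j <- r) F j = set0.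
  apply/seteqP; split => // x [Hx /bigsetU_mem [j Hj Hjx]].
  have Hij : i != j by apply/eqP => E; move: Hir; rewrite E Hj.
  have := Hd i j (mem_head _ _) (@mem_behead _ (i :: r) _ Hj) Hij.
  by move/seteqP => [/(_ x) + _]; apply.
rewrite !big_cons (Hadd Hi (B_bigU_in Hr) Hdis).
rewrite IH // => j k Hj Hk; apply: Hd; by rewrite inE ?Hj ?Hk orbT.
Qed.

End Alg.

Definition copy1 (S : set X) : set Y := [set v | v.2 = false /\ S v.1].

Lemma imgY g (A : set Y) v : (actY g @` A) v <-> A (actY (F2inv g) v).
Proof.
split => [[w Hw <-]|H].
  by rewrite /actY /= actK; case: w Hw.
by exists (actY (F2inv g) v) => //; rewrite /actY /= actVK; case: v {H}.
Qed.

Lemma imgR (A : set Y) v : (rho @` A) v <-> A (rho v).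
Proof.
split => [[w Hw <-]|H].
  by rewrite /rho /= negbK; case: w Hw.
by exists (rho v) => //; rewrite /rho /= negbK; case: v {H}.
Qed.

Definition Lall : seq letter := [:: (false,false); (false,true); (true,false); (true,true)].

Lemma Lall_mem (l : letter) : l \in Lall.
Proof. by case: l => [[] []]. Qed.

Fixpoint allseqs (n : nat) : seq (seq letter) :=
  if n is n'.+1 then [::] :: [seq a :: s | a <- Lall, s <- allseqs n'] else [:: [::]].

Lemma allseqs_mem n s : (size s <= n)%N -> s \in allseqs n.
Proof.
elim: n s => [|n IH] [|a s] //= H.
rewrite inE; apply/orP; right; move: H; rewrite ltnS => /IH H.
by case: a => [[] []]; rewrite !mem_cat (map_f _ H) ?orbT.
Qed.

Lemma Lset_sep_check : all (fun s => all (fun p => all (fun q =>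
   (p == q) || gsetb (F2mul (F2let p) (F2let (linv q)))) (Lset s)) (Lset s)) [:: true; false].
Proof. by vm_compute. Qed.

Lemma Lset_sep s p q : p \in Lset s -> q \in Lset s -> p != q ->
  gset (F2mul (F2let p) (F2let (linv q))).
Proof.
move=> Hp Hq Hpq; have := Lset_sep_check; move/allP/(_ s).
rewrite !inE; case: s Hp Hq => Hp Hq /(_ isT) /allP/(_ _ Hp)/allP/(_ _ Hq);
by rewrite (negbTE Hpq) => /gsetbP.
Qed.

Lemma Lset_inE (p : letter) s : (p \in Lset s) = (p.2 == ~~ s).
Proof. by case: p => [[] b]; rewrite /Lset !inE /= ?andbT ?andbF ?orbF. Qed.

Definition Dlist : seq letter := Lall.
Definition Dx : set X := [set u | forall i : 'I_4,
  u (F2let (nth (false,false) Lall i)) = ~~ (nth (false,false) Lall i).2].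


Lemma fin_arith (R : realType) (a b d e f : R) : 1 / 2 <= a + e / 2 + f / 2 -> a <= b -> b <= d ->
   d + 16^-1 / 2 <= 1 / 2 -> e <= 32^-1 -> f < 512^-1 -> False.
Proof. move=> *; lra. Qed.

Section PartB.
Variables (R : realType) (m : {measure set XT -> \bar R}).
Variables (K : nat) (kappa : X -> nat) (N : nat) (Q : set X).
Hypothesis Hpu : is_product_uniform m.
Hypothesis Hk : borel_gcolouring K kappa.
Hypothesis HN : odd N.
Hypothesis HQm : measurable (Q : set XT).
Hypothesis HQ : (m (Q : set XT) < (512 : R)^-1%:E)%E.
Hypothesis Hcov : forall x, Xfree x -> ~ Q x -> forall j, (1 <= j <= K)%N ->
     exists w : F2, odd (F2len w) /\ (F2len w <= N)%N /\ kappa (act w x) = j.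

Lemma m_setT : m setT = 1%E.
Proof.
have Hinj : injective (fun _ : 'I_0 => F2e) by case.
have := @Hpu 0 (fun _ => F2e) (fun _ => true) Hinj.
have -> : [set x : X | forall i : 'I_0, x F2e = true] = setT.
  by apply/seteqP; split => // x _ [].
by move=> ->; rewrite expr0 invr1.
Qed.

Lemma Xfree_meas : measurable (Xfree : set XT).
Proof.
case: Hk => Hr [Hm _].
have -> : (Xfree : set XT) = \big[setU/set0]_(j <- iota 1 K) [set x : XT | Xfree x /\ kappa x = j].
  apply/seteqP; split => x.
    move=> Hx; apply/bigsetU_mem; exists (kappa x) => //.
    by rewrite mem_iota addnC addn1 ltnS; apply: Hr.
  by case/bigsetU_mem => j _ [].
by apply: bigsetU_measurable => j _; apply: Hm.
Qed.

Lemma m_fin (S : set XT) : measurable S -> exists s : R, m S = s%:E /\ 0 <= s.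
Proof.
move=> HS.
have H1 : (m S <= 1)%E by rewrite -m_setT; apply: le_measure; rewrite ?inE //.
have H0 : (0 <= m S)%E by apply: measure_ge0.
move: H0 H1; case: (m S) => [s| |] //= H0 H1; by exists s.
Qed.

Lemma Xfree_ex : exists x, Xfree x.
Proof.
apply: contrapT => H.
have E : (~` Xfree : set XT) = setT.
  by apply/seteqP; split => // x _ Hx; apply: H; exists x.
have := nonfree_small Hpu (measurableC Xfree_meas); rewrite E m_setT lee_fin.
lra.
Qed.

Lemma K_pos : (0 < K)%N.
Proof.
case: Xfree_ex => x Hx; case: Hk => Hr _; have := Hr x Hx.
by case/andP => H1 H2; apply: leq_trans H1 H2.
Qed.

Lemma mY_set0 : mY m set0 = 0%E.
Proof. by rewrite /mY (_ : slice set0 false = set0) // (_ : slice set0 true = set0) // measure0 adde0 mule0. Qed.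

Lemma Yborel_copy1 S : measurable (S : set XT) -> Yborel (copy1 S).
Proof.
move=> HS; split.
  by rewrite (_ : slice _ _ = S) //; apply/seteqP; split => x //= [].
by rewrite (_ : slice _ _ = set0) //; apply/seteqP; split => x //= [].
Qed.

Lemma mY_copy1 S : mY m (copy1 S) = (((2:R)^-1)%:E * m S)%E.
Proof.
rewrite /mY (_ : slice (copy1 S) false = S); last by apply/seteqP; split => x //= [].
by rewrite (_ : slice (copy1 S) true = set0) ?measure0 ?adde0 //; apply/seteqP; split => x //= [].
Qed.

Variables (B : set (set Y)) (mu : set Y -> R) (c : Y -> nat).
Hypothesis Halg : is_algebra B.
Hypothesis Hpos : forall A, B A -> 0 <= mu A.
Hypothesis Hadd : forall A A', B A -> B A' -> A `&` A' = set0 -> mu (A `|` A') = mu A + mu A'.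
Hypothesis Hact : forall g A, B A -> B (actY g @` A) /\ mu (actY g @` A) = mu A.
Hypothesis Hrho : forall A, B A -> B (rho @` A) /\ mu (rho @` A) = mu A.
Hypothesis Hcomp : forall A, Ycompl_meas m A -> B A.
Hypothesis Hext : forall A B1 B2, Yborel B1 -> Yborel B2 -> B1 `<=` A -> A `<=` B2 ->
      mY m (B2 `\` B1) = 0%E -> (mu A)%:E = mY m B1.
Hypothesis Hcol : colouring K c.
Hypothesis Hcls : forall j, (1 <= j <= K)%N -> B [set v | c v = j].
Variable Z : set Y.
Hypothesis HZb : Yborel Z.
Hypothesis HZ0 : mY m Z = 0%E.
Hypothesis HZr : forall v, ~ Z v -> forall v', adj Q kappa N v v' -> c v <> c v'.

Lemma B_borel A : Yborel A -> B A.
Proof. by move=> H; apply: Hcomp; exists A, A; do 4!split => //; rewrite setDv mY_set0. Qed.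

Lemma mu_borel A : Yborel A -> (mu A)%:E = mY m A.
Proof. by move=> H; apply: (Hext (B2 := A)) => //; rewrite setDv mY_set0. Qed.

Lemma mu_copy1 S s : measurable (S : set XT) -> m S = s%:E -> mu (copy1 S) = s / 2.
Proof.
move=> HS Hs; have := mu_borel (Yborel_copy1 HS); rewrite mY_copy1 Hs -EFinM => -[->].
by rewrite mulrC.
Qed.

Lemma muZ : mu Z = 0.
Proof. by have := mu_borel HZb; rewrite HZ0 => -[]. Qed.

Definition BadZ : set Y :=
  Z `|` \big[setU/set0]_(s <- allseqs N) actY (F2inv (insubd F2e s)) @` (rho @` Z).

Lemma B_BadZ : B BadZ.
Proof.
apply: BU => //; first exact: B_borel.
by apply: B_bigU => // s; apply: (Hact _ (Hrho (B_borel HZb)).1).1.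
Qed.

Lemma mu_BadZ : mu BadZ = 0.
Proof.
have HBZ : B Z by apply: B_borel.
have HF : forall s, B (actY (F2inv (insubd F2e s)) @` (rho @` Z)).
  by move=> s; apply: (Hact _ (Hrho HBZ).1).1.
have H2 := Hpos B_BadZ.
suff : mu BadZ <= 0 by move=> H1; lra.
apply: le_trans (mu_sub Halg Hpos Hadd HBZ (B_bigU Halg _ _)) _ => //.
rewrite muZ add0r.
apply: le_trans (mu_bigU Halg Hpos Hadd _) _ => [s _|]; first exact: HF.
rewrite big1 // => s _.
by rewrite (Hact _ (Hrho HBZ).1).2 (Hrho HBZ).2 muZ.
Qed.

Lemma BadZ_ball x w : ~ BadZ (x, false) -> (F2len w <= N)%N -> ~ Z (act w x, true).
Proof.
move=> H Hw HZ; apply: H; right; apply/bigsetU_mem; exists (val w).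
  exact: allseqs_mem.
by rewrite valKd; apply/imgY; rewrite F2invK; apply/imgR.
Qed.

Definition Good0 : set Y := copy1 (Xfree `&` ~` Q).
Definition Gd : set Y := Good0 `\` BadZ.
Definition Sg (p : letter) : set Y := [set v | v.1 F2e = ~~ p.2].
Definition Cj (j : nat) : set Y := [set v | c v = j].
Definition Eqp (p : letter) : set Y :=
  \big[setU/set0]_(j <- iota 1 K) (Cj j `&` actY (F2inv (F2let p)) @` (rho @` Cj j)).
Definition Pp (p : letter) : set Y := Gd `&` Sg p `&` Eqp p.
Definition Ip (p : letter) : set Y := actY (F2let p) @` Pp p.
Definition Dset : set Y := copy1 Dx.

Lemma iota_in j : (j \in iota 1 K) = (1 <= j <= K)%N.
Proof. by rewrite mem_iota addnC addn1 ltnS. Qed.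

Lemma B_Good0 : B Good0.
Proof. by apply/B_borel/Yborel_copy1; apply: measurableI; [apply: Xfree_meas | apply: measurableC]. Qed.

Lemma B_Gd : B Gd.
Proof. by apply: BD => //; [apply: B_Good0 | apply: B_BadZ]. Qed.

Lemma B_Sg p : B (Sg p).
Proof. by apply: B_borel; split; apply: meas_coord. Qed.

Lemma B_Eqp p : B (Eqp p).
Proof.
apply: B_bigU_in => // j; rewrite iota_in => Hj.
apply: BI => //; first exact: Hcls.
exact: (Hact _ (Hrho (Hcls Hj)).1).1.
Qed.

Lemma B_Pp p : B (Pp p).
Proof. by apply: BI => //; [apply: BI => //; [apply: B_Gd | apply: B_Sg] | apply: B_Eqp]. Qed.

Lemma B_Ip p : B (Ip p).
Proof. exact: (Hact _ (B_Pp p)).1. Qed.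

Lemma Eqp_E p v : Eqp p v <-> c v = c (act (F2let p) v.1, ~~ v.2).
Proof.
split.
  case/bigsetU_mem => j _ [Hj /imgY]; rewrite F2invK => /imgR.
  by rewrite /Cj /= => ->.
move=> E; apply/bigsetU_mem; exists (c v).
  by rewrite iota_in; apply: Hcol.
split => //; apply/imgY; rewrite F2invK; apply/imgR.
by rewrite /Cj /= E; case: v {E}.
Qed.

Lemma N_pos : (1 <= N)%N.
Proof. by case: N HN. Qed.

Lemma Gd_cover v : Gd v -> exists2 p, p \in Lset (v.1 F2e) & Pp p v.
Proof.
case: v => x b [[/= Eb [Fx Qx]] HB]; subst b.
have HZx : ~ Z (x, false) by move=> H; apply: HB; left.
have Hball : forall w, (F2len w <= N)%N -> ~ Z (act w x, true).
  by move=> w; apply: BadZ_ball.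
case: Hk => Hkr [_ Hkg].
have Hrep : forall j, exists w : F2, (1 <= j <= K)%N ->
   [/\ odd (F2len w), (F2len w <= N)%N, kappa (act w x) = j &
       forall p, p \in Lset (x F2e) -> kappa (act (F2let p) x) = j -> w = F2let p].
  move=> j; case: (boolP (1 <= j <= K)%N) => Hj; last by exists F2e.
  case: (pselect (exists2 p, p \in Lset (x F2e) & kappa (act (F2let p) x) = j)).
    case=> p0 Hp0 E0; exists (F2let p0) => _; split => //; first exact: N_pos.
    move=> p Hp Ep; case: (eqVneq p p0) => [->//|Hne].
    have := Hkg _ _ (@Xfree_act (F2let p0) x Fx) (Lset_sep Hp Hp0 Hne).
    by rewrite act_mul F2mulA -F2inv_let F2mulVg F2mulg1 E0 Ep.
  move=> Hno; case: (Hcov Fx Qx Hj) => w [Hw1 [Hw2 Hw3]]; exists w => _; split => //.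
  by move=> p Hp Ep; case: Hno; exists p.
have [rep Hrep'] := boolp.choice Hrep.
pose phi j := c (act (rep j) x, true).
have Hphi1 : forall j, (1 <= j <= K)%N -> (1 <= phi j <= K)%N by move=> j _; apply: Hcol.
have Hphi2 : forall j j', (1 <= j <= K)%N -> (1 <= j' <= K)%N -> j <> j' -> phi j <> phi j'.
  move=> j j' Hj Hj' Hne.
  case: (Hrep' j Hj) => o1 l1 k1 _; case: (Hrep' j' Hj') => o2 l2 k2 _.
  apply: HZr; first exact: Hball.
  split; first exact: Xfree_act.
  split; first exact: Xfree_act.
  split; last by rewrite k1 k2 => /esym.
  exists (F2mul (rep j') (F2inv (rep j))).
  have [Hl1 Hl2] := F2len_mul (rep j') (F2inv (rep j)).
  rewrite F2len_inv in Hl1 Hl2.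
  split; first by rewrite Hl2 oddD o1 o2.
  split; first by apply: (leq_trans Hl1); apply: (leq_trans (leq_add l2 l1)); rewrite mul2n -addnn leq_addr.
  by rewrite act_mul F2mulA F2mulVg F2mulg1.
have Hcx : (1 <= c (x, false) <= K)%N by apply: Hcol.
have [j [Hj Ej]] := pigeon Hphi1 Hphi2 Hcx.
case: (Hrep' j Hj) => o1 l1 k1 u1.
have [u [tu Eu]] : exists u, tset x u /\ kappa (act (rep j) x) = kappa u.
  apply: contrapT => Hno; apply: (HZr HZx (v' := (act (rep j) x, true))) => //.
  split => //; split => //; split; first by exists (rep j).
  by move=> u tu Eu; apply: Hno; exists u.
case/tsetP: tu => p Hp Eup.
exists p => //.
have Erep : rep j = F2let p by apply: u1 => //; rewrite -Eup -Eu.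
split; first split.
- by split; [split|].
- by rewrite /Sg /=; move: Hp; rewrite Lset_inE => /eqP ->; rewrite negbK.
- by apply/Eqp_E; rewrite /= -Ej /phi Erep.
Qed.

Lemma Ip_E p u b : Ip p (u, b) ->
  [/\ b = false, Xfree (act (F2inv (F2let p)) u), ~ Q (act (F2inv (F2let p)) u),
      ~ Z (act (F2inv (F2let p)) u, false) &
      (act (F2inv (F2let p)) u) F2e = ~~ p.2 /\
      c (act (F2inv (F2let p)) u, false) = c (u, true)].
Proof.
move/imgY => [[[[/= Eb [Fx Qx]] HB] HS] /Eqp_E]; rewrite /= actVK => Ec.
subst b; split => //; first by move=> H; apply: HB; left.
Qed.

Lemma tset_of x p : x F2e = ~~ p.2 -> tset x (act (F2let p) x).
Proof. by move=> E; apply/tsetP; exists p => //; rewrite Lset_inE E negbK. Qed.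

Lemma Ip_disj p q : p != q -> Ip p `&` Ip q = set0.
Proof.
move=> Hpq; apply/seteqP; split => // -[u b] [/Ip_E [Eb F1 Q1 Z1 [S1 C1]] /Ip_E [_ F2 Q2 Z2 [S2 C2]]].
set x := act (F2inv (F2let p)) u in F1 Q1 Z1 S1 C1.
set y := act (F2inv (F2let q)) u in F2 Q2 Z2 S2 C2.
have Fu : Xfree u by rewrite -(actVK (F2let p) u); apply: Xfree_act.
apply: (HZr Z1 (v' := (y, false))); last by rewrite C1 C2.
split.
  move=> Exy; move/negP: Hpq; apply; apply/eqP.
  have := act_free_inj Fu Exy => /(congr1 F2inv); rewrite !F2invK.
  by move/(congr1 val) => /= [].
do 4!split => //.
exists u; split.
  by rewrite -{1}(actVK (F2let p) u); apply: tset_of.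
by rewrite -{1}(actVK (F2let q) u); apply: tset_of.
Qed.

Lemma Lall_idx (l : letter) : exists i : 'I_4, nth (false, false) Lall i = l.
Proof.
have Hl := Lall_mem l.
have Hi : (index l Lall < 4)%N by rewrite -[4%N]/(size Lall) index_mem.
by exists (Ordinal Hi); rewrite /= nth_index.
Qed.

Lemma Ip_Dset p : Ip p `&` Dset = set0.
Proof.
apply/seteqP; split => // -[u b] [/Ip_E [Eb F1 Q1 Z1 [S1 C1]] [_ HD]].
have [i Ei] := Lall_idx (linv p).
have := HD i; rewrite Ei /=.
rewrite -(actVK (F2let p) u) /act -F2inv_let F2mulVg.
rewrite /act in S1; rewrite S1.
by case: p {Ei S1 C1 F1 Q1 Z1} => a [].
Qed.

Lemma m_Dx : m (Dx : set XT) = ((2:R)^-4)%:E.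
Proof.
have Hinj : injective (fun i : 'I_4 => F2let (nth (false, false) Lall i)).
  move=> i j /(congr1 val) [] /eqP; rewrite nth_uniq // => /eqP; apply: val_inj.
exact: (Hpu (fun i => ~~ (nth (false, false) Lall i).2) Hinj).
Qed.

Lemma Dx_meas : measurable (Dx : set XT).
Proof. exact: meas_cyl. Qed.

Lemma partB_contra : False.
Proof.
have HB0 := B_Good0; have HBG := B_Gd; have HBZ := B_BadZ.
have HXm : measurable (~` Xfree : set XT) by apply: measurableC; apply: Xfree_meas.
have [sX [HsX _]] := m_fin HXm.
have HsX' : sX <= (32:R)^-1 by rewrite -lee_fin -HsX; apply: nonfree_small.
have [sQ [HsQ _]] := m_fin HQm.
have HsQ' : sQ < (512:R)^-1 by rewrite -lte_fin -HsQ.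
have muT := mu_copy1 measurableT m_setT.
have muX := mu_copy1 HXm HsX.
have muQ := mu_copy1 HQm HsQ.
have muD := mu_copy1 Dx_meas m_Dx.
have BT1 : B (copy1 setT) by apply/B_borel/Yborel_copy1.
have BX1 : B (copy1 (~` Xfree)) by apply/B_borel/Yborel_copy1.
have BQ1 : B (copy1 Q) by apply/B_borel/Yborel_copy1.
have BD1 : B Dset by apply/B_borel/Yborel_copy1; exact: Dx_meas.
have L1 : mu (copy1 setT) <= mu Good0 + mu (copy1 (~` Xfree)) + mu (copy1 Q).
  have H : mu (copy1 setT) <= mu (Good0 `|` copy1 (~` Xfree) `|` copy1 Q).
    apply: (mu_mono Halg Hpos Hadd) => //; first by apply: BU => //; apply: BU.
    move=> [x b] [/= -> _].
    case: (pselect (Q x)) => HQx; first by right.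
    case: (pselect (Xfree x)) => HXx; first by left; left.
    by left; right.
  apply: le_trans H _.
  apply: le_trans (mu_sub Halg Hpos Hadd (BU Halg HB0 BX1) BQ1) _.
  by rewrite lerD2r; apply: (mu_sub Halg Hpos Hadd).
have L2 : mu Good0 <= mu Gd.
  have H : mu Good0 <= mu (Gd `|` BadZ).
    apply: (mu_mono Halg Hpos Hadd) => //; first by apply: BU.
    by move=> v Hv; case: (pselect (BadZ v)) => H; [right|left].
  apply: le_trans H _.
  by apply: le_trans (mu_sub Halg Hpos Hadd HBG HBZ) _; rewrite mu_BadZ addr0.
have L3 : mu Gd <= \sum_(p <- Lall) mu (Pp p).
  have H : mu Gd <= mu (\big[setU/set0]_(p <- Lall) Pp p).
    apply: (mu_mono Halg Hpos Hadd) => //; first by apply: B_bigU => // p; apply: B_Pp.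
    move=> v /Gd_cover [p _ Hp]; apply/bigsetU_mem; exists p => //; exact: Lall_mem.
  apply: le_trans H _.
  by apply: (mu_bigU Halg Hpos Hadd) => // p _; apply: B_Pp.
have L4 : \sum_(p <- Lall) mu (Pp p) = mu (\big[setU/set0]_(p <- Lall) Ip p).
  rewrite (mu_bigU_disj Halg Hadd) //.
  - by apply: eq_bigr => p _; rewrite (Hact _ (B_Pp p)).2.
  - by move=> p _; apply: B_Ip.
  - by move=> p q _ _; apply: Ip_disj.
have BU1 : B (\big[setU/set0]_(p <- Lall) Ip p) by apply: B_bigU => // p; apply: B_Ip.
have L5 : mu (\big[setU/set0]_(p <- Lall) Ip p) + mu Dset <= mu (copy1 setT).
  rewrite -Hadd //.
    apply: (mu_mono Halg Hpos Hadd) => //; first by apply: BU.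
    by move=> [u b] [/bigsetU_mem [p _ /Ip_E [Eb _ _ _ _]]|[Eb _]]; split.
  apply/seteqP; split => // v [/bigsetU_mem [p _ Hp] HD].
  by have := Ip_Dset p; move/seteqP => [/(_ v) + _]; apply.
have E16 : (2:R)^-4 = 16^-1 by rewrite -natrX.
rewrite muT muX muQ in L1; rewrite muD E16 muT in L5.
rewrite -L4 in L5.
exact: (fin_arith L1 L2 L3 L5 HsX' HsQ').
Qed.

End PartB.

Theorem proposition5 (R : realType) (m : {measure set XT -> \bar R})
  (K : nat) (kappa : X -> nat) (N : nat) (Q : set X) :
  is_product_uniform m ->
  borel_gcolouring K kappa ->
  (forall K' k, borel_gcolouring K' k -> (K <= K')%N) ->
  (forall j, (1 <= j <= K)%N ->
     (0 < m ([set x | Xfree x /\ kappa x = j] : set XT))%E) ->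
  odd N ->
  measurable (Q : set XT) ->
  (m (Q : set XT) < (512 : R)^-1%:E)%E ->
  (forall x, Xfree x -> ~ Q x -> forall j, (1 <= j <= K)%N ->
     exists w : F2, odd (F2len w) /\ (F2len w <= N)%N /\ kappa (act w x) = j) ->
  paradoxical m (adj Q kappa N) K.
Proof.
move=> Hpu Hk _ _ HN HQm HQ Hcov; split.
  exists (cA kappa Q); split.
    have HK := K_pos Hpu Hk.
    case: (Hk) => Hr _.
    move=> [x []]; rewrite /cA; case: pselect => [H|_] //=; first by apply: Hr.
    by apply: Hr; apply: Xfree_act; case: H.
  exists set0; split.
    by rewrite /Yborel /slice; split; exact: measurable0.
  split; first by have := mY_set0 m.
  by move=> v _ v'; apply: (cA_prop Hk).
move=> [B [mu [c [Halg [Hpos [Hone [Hadd [Hact [Hrho [Hcomp [Hext [Hcol [[Z [HZb [HZ0 HZr]]] Hcls]]]]]]]]]]]]].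
exact: (partB_contra Hpu Hk HN HQm HQ Hcov Halg Hpos Hadd Hact Hrho Hcomp Hext Hcol Hcls HZb HZ0 HZr).
Qed.
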